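(* Let $A$ be a cubic graph with $v(A)\equiv 0\pmod 6$, let $a\in V(A)$ with $N(a,A)=\{a_1,a_2,a_3\}$, and suppose $A$ has no $\Lambda$-factor containing the edge $e=aa_1$. Let $G=Y(A,a)$. Then $v(G)\equiv 0\pmod 6$ and $G$ has no $\Lambda$-factor.
   Context: Graphs are finite, undirected, without loops or multiple edges; $v(G)=|V(G)|$; $N(x,G)$ is the set of neighbours of $x$. $Y(A,a)$ is defined as follows: take three disjoint copies $A^1,A^2,A^3$ of $A$, where $a^i,a^i_1,a^i_2,a^i_3$ denote the copies in $A^i$ of $a,a_1,a_2,a_3$; form $(A^1-a^1)\cup(A^2-a^2)\cup(A^3-a^3)$ and add three new vertices $z_1,z_2,z_3$ and the nine new edges $z_ja^i_j$, $i,j\in\{1,2,3\}$. A $\Lambda$-factor of a graph is a spanning subgraph each of whose components is a path on 3 vertices; it contains an edge $e$ if $e$ is an edge of it. *)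

(* Defs.v *)
From mathcomp Require Import all_boot.
Set Implicit Arguments. Unset Strict Implicit. Unset Printing Implicit Defensive.
Set Warnings "-notation-overridden".

Definition simple_graph (T : finType) (E : rel T) : Prop :=
  symmetric E /\ irreflexive E.

Definition nbhd (T : finType) (E : rel T) (x : T) : {set T} := [set y | E x y].

Definition cubic (T : finType) (E : rel T) : Prop :=
  forall x : T, #|nbhd E x| = 3.

(* Lambda-factor: a spanning subgraph (edge relation F ⊆ E, symmetric) each
   of whose connected components is a path u - v - w on 3 vertices. *)
Definition Lambda_factor (T : finType) (E F : rel T) : Prop :=
  subrel F E /\ symmetric F /\
  forall x : T, exists u v w : T,
    uniq [:: u; v; w] /\
    (forall y, connect F x y <-> y \in [:: u; v; w]) /\
    (forall p q, p \in [:: u; v; w] ->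
       (F p q <-> (p, q) \in [:: (u, v); (v, u); (v, w); (w, v)])).

Definition has_Lambda_factor (T : finType) (E : rel T) : Prop :=
  exists F : rel T, Lambda_factor E F.

Definition has_Lambda_factor_containing (T : finType) (E : rel T) (x y : T) : Prop :=
  exists F : rel T, Lambda_factor E F /\ F x y.

(* Vertices: inl (i, x) is the copy x^i in A^i - a^i
   (i : 'I_3, x : T with x != a); inr j is the new vertex z_j. *)
Arguments nbhd {T} E x.
Definition YV (T : finType) (a : T) : finType :=
  (('I_3 * {x : T | x != a}) + 'I_3)%type.

Arguments YV : clear implicits.

Definition Yrel (T : finType) (E : rel T) (a : T) (nb : 'I_3 -> T) : rel (YV T a) :=
  fun p q =>
    match p, q with
    | inl (i, x), inl (j, y) => (i == j) && E (val x) (val y)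
    | inl (i, x), inr j => val x == nb j
    | inr j, inl (i, x) => val x == nb j
    | inr _, inr _ => false
    end.
Arguments Yrel {T} E a nb _ _.

(* Main.v *)
Require Import Defs.
From mathcomp Require Import all_boot.
Set Warnings "-notation-overridden".
Set Implicit Arguments. Unset Strict Implicit. Unset Printing Implicit Defensive.

Lemma connect_inv (T : finType) (e : rel T) (P : T -> Prop) x :
  P x -> (forall y z, connect e x y -> P y -> e y z -> P z) ->
  forall y, connect e x y -> P y.
Proof.
move=> Px H y /connectP [p pth ->]; move: pth.
elim/last_ind: p => [|p z IH] //=.
rewrite rcons_path => /andP [pp ez]; rewrite last_rcons.
apply: (H (last x p)) => //; last exact: IH.
by apply/connectP; exists p.
Qed.

Ltac pairs_simp u v w uv uw vw :=
  rewrite ?inE /= ?xpair_eqE ?eqxx ?(negbTE uv) ?(negbTE uw) ?(negbTE vw)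
    ?(eq_sym v u) ?(eq_sym w u) ?(eq_sym w v) ?(negbTE uv) ?(negbTE uw) ?(negbTE vw) /=.

Section LF.
Variables (T : finType) (E F : rel T).
Hypothesis LF : Lambda_factor E F.

Lemma LF_symF : symmetric F. Proof. by case: LF => _ []. Qed.
Lemma LF_sub : subrel F E. Proof. by case: LF. Qed.

Lemma LF_connect_sym : connect_sym F.
Proof. exact: sym_connect_sym LF_symF. Qed.

Lemma LF_card x : #|[set y | connect F x y]| = 3.
Proof.
case: LF => _ [_ /(_ x) [u [v [w [U [C _]]]]]].
have -> : [set y | connect F x y] = [set y in [:: u; v; w]].
  by apply/setP => y; rewrite inE [in RHS]inE; apply/idP/idP => /C.
by rewrite cardsE; apply/card_uniqP.
Qed.

Lemma LF_adj2 x y : connect F x y -> x != y -> F x y \/ exists t, F x t /\ F t y.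
Proof.
case: LF => _ [_ /(_ x) [u [v [w [U [C Hp]]]]]].
move: U; rewrite /= !inE negb_or andbT => /andP [/andP [uv uw] vw].
have xin : x \in [:: u; v; w] by apply/C; exact: connect0.
move=> /C yin.
have Huv : F u v by apply/(Hp u v); pairs_simp u v w uv uw vw.
have Hvu : F v u by apply/(Hp v u); pairs_simp u v w uv uw vw.
have Hvw : F v w by apply/(Hp v w); pairs_simp u v w uv uw vw.
have Hwv : F w v by apply/(Hp w v); pairs_simp u v w uv uw vw.
move: xin yin; rewrite !inE => /or3P [] /eqP -> /or3P [] /eqP ->;
  rewrite ?eqxx ?(negbTE uv) ?(negbTE uw) ?(negbTE vw) ?(eq_sym v u) ?(eq_sym w u) ?(eq_sym w v)
     ?(negbTE uv) ?(negbTE uw) ?(negbTE vw) //; eauto.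
Qed.

Lemma LF_tri x y z : F x y -> F y z -> F x z -> False.
Proof.
case: LF => _ [_ /(_ x) [u [v [w [U [C Hp]]]]]].
move: U; rewrite /= !inE negb_or andbT => /andP [/andP [uv uw] vw].
have xin : x \in [:: u; v; w] by apply/C; exact: connect0.
move=> Fxy Fyz Fxz.
have yin : y \in [:: u; v; w] by apply/C; exact: connect1.
have zin : z \in [:: u; v; w] by apply/C; exact: connect1.
move: (Hp _ y xin) (Hp _ z xin) (Hp _ z yin) => Py Pz Pyz.
move/Py: Fxy; move/Pz: Fxz; move/Pyz: Fyz.
move: xin yin zin; rewrite !inE => /or3P [] /eqP -> /or3P [] /eqP -> /or3P [] /eqP ->;
  pairs_simp u v w uv uw vw.
all: rewrite /is_true => h1 h2 h3; congruence.
Qed.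


Lemma LF_P4 x y z t : F x y -> F y z -> F z t -> x != z -> y != t -> False.
Proof.
case: LF => _ [sym /(_ y) [u [v [w [U [C Hp]]]]]].
move: U; rewrite /= !inE negb_or andbT => /andP [/andP [uv uw] vw].
have yin : y \in [:: u; v; w] by apply/C; exact: connect0.
move=> Fxy Fyz Fzt xz yt.
have xin : x \in [:: u; v; w] by apply/C; apply: connect1; rewrite sym.
have zin : z \in [:: u; v; w] by apply/C; exact: connect1.
have tin : t \in [:: u; v; w] by apply/C; exact: connect_trans (connect1 Fyz) (connect1 Fzt).
move: (Hp _ x yin) (Hp _ z yin) (Hp _ t zin) => Px Pz Pt.
rewrite sym in Fxy.
move/Px: Fxy; move/Pz: Fyz; move/Pt: Fzt; move: xz yt.
move: xin yin zin tin; rewrite !inE => /or3P [] /eqP -> /or3P [] /eqP -> /or3P [] /eqP -> /or3P [] /eqP ->;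
  pairs_simp u v w uv uw vw.
all: rewrite /is_true => h1 h2 h3 h4 h5; congruence.
Qed.

End LF.

Lemma LF_intro (T : finType) (E F : rel T) :
  subrel F E -> symmetric F ->
  (forall x, exists u v w, uniq [:: u; v; w] /\ x \in [:: u; v; w] /\
     forall p q, p \in [:: u; v; w] ->
       (F p q <-> (p, q) \in [:: (u, v); (v, u); (v, w); (w, v)])) ->
  Lambda_factor E F.
Proof.
move=> sub sym H; split=> //; split=> // x.
have [u [v [w [U [xin Hp]]]]] := H x.
exists u, v, w; split=> //; split=> // y; split.
  apply: (@connect_inv _ F (fun y => y \in [:: u; v; w])) => // p q _ pin Fpq.
  move/(Hp p q pin): Fpq; rewrite !inE /= !xpair_eqE.
  by case/or4P => /andP [_ /eqP ->]; rewrite eqxx ?orbT.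
have Huv : F u v by apply/(Hp u v); rewrite !inE eqxx.
have Hvw : F v w by apply/(Hp v w); rewrite !inE eqxx !orbT.
have cs : connect_sym F := sym_connect_sym sym.
have cu : forall p, p \in [:: u; v; w] -> connect F u p.
  move=> p; rewrite !inE => /or3P [] /eqP ->; first exact: connect0.
    exact: connect1.
  by apply: connect_trans (connect1 Huv) (connect1 Hvw).
move=> yin; apply: connect_trans (cu _ yin); rewrite cs; exact: cu.
Qed.

From mathcomp Require Import all_boot zify.
Set Warnings "-notation-overridden".
Set Implicit Arguments. Unset Strict Implicit. Unset Printing Implicit Defensive.

Definition o0 : 'I_3 := Ordinal (isT : 0 < 3).
Definition o1 : 'I_3 := Ordinal (isT : 1 < 3).
Definition o2 : 'I_3 := Ordinal (isT : 2 < 3).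
Lemma ord3_cases (j : 'I_3) : j = o0 \/ j = o1 \/ j = o2.
Proof.
case: j => [[|[|[|m]]] Hm]; [left|right;left|right;right|by []]; exact/val_inj.
Qed.

Section Main.
Variables (T : finType) (E : rel T) (a : T) (nb : 'I_3 -> T).
Hypothesis sg : simple_graph E.
Hypothesis nba : nbhd E a = [set nb j | j : 'I_3].
Hypothesis nbi : injective nb.
Let V := YV T a.
Let Sub := {x : T | x != a}.
Let G := Yrel E a nb.
Variable F : rel V.
Hypothesis LF : Lambda_factor G F.

Definition gi (k : 'I_3) (y : Sub) : V := inl (k, y).
Lemma gi_inj k : injective (gi k).
Proof. by move=> y1 y2 [->]. Qed.

Definition zc (p : V) := [exists j, connect F p (inr j)].
Definition S k : {set Sub} := [set y | zc (gi k y)].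

Let csym := LF_connect_sym LF.
Let Fsym := LF_symF LF.

Lemma zc_connect p q : connect F p q -> zc q -> zc p.
Proof.
move=> pq /existsP [j qj]; apply/existsP; exists j; exact: connect_trans pq qj.
Qed.

Lemma K1 k y q : ~~ zc (gi k y) -> connect F (gi k y) q -> exists y', q = gi k y'.
Proof.
move=> nz; apply: (@connect_inv _ F (fun q => exists y', q = gi k y')).
  by exists y.
move=> r s cr [y' e] Frs; subst r; case: s Frs => [[k' y'']|j] Frs.
  have := LF_sub LF Frs; rewrite /G /= => /andP [/eqP -> _]; by exists y''.
exfalso; move/negP: nz; apply; apply/existsP; exists j.
exact: connect_trans cr (connect1 Frs).
Qed.

Lemma K2 k : 3 %| #|~: S k|.
Proof.
set D := ~: S k.
pose R := fun y y' => connect F (gi k y) (gi k y').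
have eqR : {in D & &, equivalence_rel R}.
  move=> x y z _ _ _; split; first exact: connect0.
  by move=> xy; rewrite /R (same_connect csym xy).
rewrite (card_partition (equivalence_partitionP eqR)).
apply: dvdn_sum => B /imsetP [y yD ->].
suff -> : #|[set y' in D | R y y']| = 3 by [].
rewrite -(LF_card LF (gi k y)) -(card_imset _ (@gi_inj k)).
apply: eq_card => q; rewrite !inE; apply/imsetP/idP.
  by case=> y'; rewrite !inE => /andP [_ ?] ->.
have nz : ~~ zc (gi k y) by move: yD; rewrite !inE.
move=> cq; have [y' qe] := K1 nz cq; exists y' => //; subst q.
rewrite !inE /R cq andbT; apply: contra nz; exact: zc_connect.
Qed.

Hypothesis n6 : #|T| %% 6 = 0.

Lemma cardSub : #|{: Sub}| = #|T|.-1.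
Proof. rewrite card_sig. exact: cardC1. Qed.

Lemma K3 k : #|S k| %% 3 = 2.
Proof.
have n0 : 0 < #|T| by apply/card_gt0P; exists a.
have := cardsC (S k); rewrite cardSub => e.
have := K2 k; lia.
Qed.

Definition img k : {set V} := [set gi k y | y in S k].
Definition Xj j : {set V} := [set q | connect F (inr j) q] :\ inr j.

Lemma cardXj j : #|Xj j| = 2.
Proof.
have := cardsD1 (inr j : V) [set q | connect F (inr j) q].
by rewrite (LF_card LF) inE connect0 => [[]].
Qed.

Lemma img_sub k : img k \subset (Xj o0 :|: Xj o1 :|: Xj o2).
Proof.
apply/subsetP => q /imsetP [y]; rewrite inE => /existsP [j cj] ->.
have xj : gi k y \in Xj j by rewrite !inE; rewrite csym cj.
by case: (ord3_cases j) xj => [->|[->|->]] xj; rewrite !inE in xj *; rewrite xj ?orbT.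
Qed.

Lemma img_disj k k' : k != k' -> img k :&: img k' = set0.
Proof.
move=> kk; apply/setP => q; rewrite !inE.
apply/negP => /andP [/imsetP [y _ ->] /imsetP [y' _ [e _]]].
by rewrite e eqxx in kk.
Qed.

Lemma K4 : #|S o0| + #|S o1| + #|S o2| <= 6.
Proof.
have ci k : #|img k| = #|S k| by rewrite card_imset //; exact: gi_inj.
rewrite -!ci.
have d01 := cardsUI (img o0) (img o1).
rewrite img_disj // cards0 addn0 in d01.
have d012 := cardsUI (img o0 :|: img o1) (img o2).
have e2 : (img o0 :|: img o1) :&: img o2 = set0.
  by rewrite setIUl !img_disj // setU0.
rewrite e2 cards0 addn0 d01 in d012.
rewrite -d012.
have sub : img o0 :|: img o1 :|: img o2 \subset (Xj o0 :|: Xj o1 :|: Xj o2).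
  by rewrite !subUset !img_sub.
apply: leq_trans (subset_leq_card sub) _.
apply: leq_trans (leq_card_setU _ _).1 _.
rewrite cardXj -[6]/(4 + 2) leq_add2r.
by apply: leq_trans (leq_card_setU _ _).1 _; rewrite !cardXj.
Qed.

Lemma K5 k : #|S k| = 2.
Proof.
have := K4; have := K3 o0; have := K3 o1; have := K3 o2.
case: (ord3_cases k) => [->|[->|->]]; lia.
Qed.

Variable i : 'I_3.
Variable y0 : Sub.
Hypothesis Hy0 : F (inr ord0) (gi i y0).

Definition Fp (x y : T) : bool :=
  match (insub x : option Sub), (insub y : option Sub) with
  | Some x', Some y' => F (gi i x') (gi i y')
  | Some x', None => [exists j, F (gi i x') (inr j)]
  | None, Some y' => [exists j, F (inr j) (gi i y')]
  | None, None => false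
  end.

Lemma insa : (insub a : option Sub) = None.
Proof. by rewrite insubF // eqxx. Qed.

Lemma Fp_vv (y y' : Sub) : Fp (val y) (val y') = F (gi i y) (gi i y').
Proof. by rewrite /Fp !valK. Qed.
Lemma Fp_va (y : Sub) : Fp (val y) a = [exists j, F (gi i y) (inr j)].
Proof. by rewrite /Fp valK insa. Qed.
Lemma Fp_av (y : Sub) : Fp a (val y) = [exists j, F (inr j) (gi i y)].
Proof. by rewrite /Fp valK insa. Qed.
Lemma Fp_aa : Fp a a = false.
Proof. by rewrite /Fp insa. Qed.

Lemma Tcase (x : T) : x = a \/ exists y : Sub, x = val y.
Proof.
case: (eqVneq x a) => [->|xa]; [by left | right; by exists (exist _ x xa)].
Qed.

Lemma Fp_sym : symmetric Fp.
Proof.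
move=> x y; case: (Tcase x) => [->|[x' ->]]; case: (Tcase y) => [->|[y' ->]];
  rewrite ?Fp_aa ?Fp_av ?Fp_va ?Fp_vv // ?Fsym //.
all: by apply/existsP/existsP => -[j h]; exists j; rewrite Fsym.
Qed.

Lemma Eav (y : Sub) j : F (inr j) (gi i y) -> E a (val y).
Proof.
move/(LF_sub LF); rewrite /G /= => /eqP ->.
have : nb j \in nbhd E a by rewrite nba; apply/imsetP; exists j.
by rewrite inE.
Qed.

Lemma Fp_sub : subrel Fp E.
Proof.
move=> x y; case: (Tcase x) => [->|[x' ->]]; case: (Tcase y) => [->|[y' ->]];
  rewrite ?Fp_aa ?Fp_av ?Fp_va ?Fp_vv //.
- by case/existsP => j; exact: Eav.
- case/existsP => j h; rewrite (proj1 sg); apply: (Eav (j := j)); by rewrite Fsym.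
- by move/(LF_sub LF); rewrite /G /= => /andP [].
Qed.

Lemma Fp_irr x : Fp x x = false.
Proof. apply/negP => /Fp_sub; by rewrite (proj2 sg). Qed.

Lemma pm_inj (A B : Type) (f : A -> B) : injective f ->
  injective (fun pq : A * A => (f pq.1, f pq.2)).
Proof. by move=> fi [x1 x2] [y1 y2] /= [/fi -> /fi ->]. Qed.

Lemma mem_map2 (A B : eqType) (f : A -> B) (fi : injective f) x y (s : seq (A * A)) :
  ((f x, f y) \in map (fun pq => (f pq.1, f pq.2)) s) = ((x, y) \in s).
Proof. by have := mem_map (pm_inj fi) s (x, y). Qed.

Lemma tripA (y : Sub) : y \notin S i ->
  exists u v w : T, uniq [:: u; v; w] /\ val y \in [:: u; v; w] /\
     forall p q, p \in [:: u; v; w] ->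
       (Fp p q <-> (p, q) \in [:: (u, v); (v, u); (v, w); (w, v)]).
Proof.
rewrite inE => nz.
case: LF => _ [_ /(_ (gi i y)) [u [v [w [Uq [C Hp]]]]]].
have [u' eu] := K1 nz (proj2 (C u) (mem_head _ _)).
have vi : v \in [:: u; v; w] by rewrite !inE eqxx orbT.
have wi : w \in [:: u; v; w] by rewrite !inE eqxx !orbT.
have [v' ev] := K1 nz (proj2 (C v) vi).
have [w' ew] := K1 nz (proj2 (C w) wi).
subst u v w.
set l := [:: u'; v'; w'].
set P := [:: (u', v'); (v', u'); (v', w'); (w', v')].
exists (val u'), (val v'), (val w').
change (uniq (map val l) /\ val y \in map val l /\
  forall p q : T, p \in map val l ->
    (Fp p q <-> (p, q) \in map (fun pq : Sub * Sub => (val pq.1, val pq.2)) P)).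

have Uq2 : uniq (map (gi i) l) by exact: Uq.
rewrite (map_inj_uniq (@gi_inj i)) in Uq2.
rewrite (map_inj_uniq val_inj) (mem_map val_inj); split=> //; split.
  rewrite -(mem_map (gi_inj (k:=i))); apply/C; exact: connect0.
move=> p q /mapP [p' p'l ->].
have pl : gi i p' \in map (gi i) l by rewrite (mem_map (gi_inj (k:=i))).
have cp : connect F (gi i y) (gi i p') by apply/C.
case: (Tcase q) => [->|[q' ->]].
  rewrite Fp_va; split.
    case/existsP => j Fj; move/negP: nz; case; apply/existsP; exists j.
    exact: connect_trans cp (connect1 Fj).
  by case/mapP => -[p1 [q2 Hq]] _ [_ /= e]; rewrite -e eqxx in Hq.
rewrite Fp_vv (mem_map2 val_inj).
move: (Hp _ (gi i q') pl).
change ((F (gi i p') (gi i q') <->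
  (gi i p', gi i q') \in map (fun pq : Sub * Sub => (gi i pq.1, gi i pq.2)) P) ->
  F (gi i p') (gi i q') <-> (p', q') \in P).
by rewrite (mem_map2 (@gi_inj i)).
Qed.

Lemma B1a (y : Sub) : y \notin S i -> Fp a (val y) = false.
Proof.
rewrite Fp_av inE => nz; apply/negbTE/negP => /existsP [j Fj]; move/negP: nz; apply; rewrite /zc.
by apply/existsP; exists j; apply: connect1; rewrite Fsym.
Qed.

Lemma B1b (s y : Sub) : s \in S i -> y \notin S i -> Fp (val s) (val y) = false.
Proof.
rewrite Fp_vv !inE => /existsP [j cj] nz; apply/negbTE/negP => Fsy; move/negP: nz; apply; rewrite /zc.
apply/existsP; exists j; apply: connect_trans cj; rewrite csym; exact: connect1.
Qed.

Lemma B2 (s t : Sub) : Fp a (val s) -> Fp a (val t) -> Fp (val s) (val t) -> False.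
Proof.
rewrite !Fp_av Fp_vv => /existsP [j Fj] /existsP [k Fk] Fst.
have Fk2 : F (gi i t) (inr k) by rewrite Fsym.
exact: (LF_P4 LF Fj Fst Fk2).
Qed.

Lemma B3 (s t : Sub) : s \in S i -> s != t -> (forall y, y \in S i -> y = s \/ y = t) ->
  Fp a (val s) || Fp (val s) (val t) && Fp a (val t).
Proof.
move=> sS st Sst; have := sS; rewrite inE => /existsP [j cj].
case: (LF_adj2 LF cj isT) => [Fj|[t0 [F1 F2]]].
  by rewrite Fp_av; apply/orP; left; apply/existsP; exists j; rewrite Fsym.
case: t0 F1 F2 => [[k y]|k] F1 F2; last first.
  by rewrite Fp_av; apply/orP; left; apply/existsP; exists k; rewrite Fsym.
have := LF_sub LF F1; rewrite /G /= => /andP [/eqP ki _]; subst k.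
have yS : y \in S i by rewrite inE /zc; apply/existsP; exists j; exact: connect1.
case: (Sst y yS) => ey; subst y.
  by have := Fp_irr (val s); rewrite Fp_vv F1.
apply/orP; right; rewrite Fp_vv Fp_av F1 /=; apply/existsP; exists j; by rewrite Fsym.
Qed.

Lemma tab_a (s t : Sub) q : S i = [set s; t] -> s != t ->
  Fp a q = (q == val s) && Fp a (val s) || (q == val t) && Fp a (val t).
Proof.
move=> St st.
case: (Tcase q) => [->|[y ->]].
  by rewrite Fp_aa !(eq_sym a) (negbTE (valP s)) (negbTE (valP t)).
rewrite !val_eqE.
case: (boolP (y \in S i)) => yS.
  move: (yS); rewrite St !inE => /orP [] /eqP ->; rewrite eqxx ?(negbTE st) /= ?orbF //.
  by rewrite eq_sym (negbTE st).
have ys : y != s by apply: contraNneq yS => ->; rewrite St !inE eqxx.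
have yt : y != t by apply: contraNneq yS => ->; rewrite St !inE eqxx orbT.
by rewrite B1a // (negbTE ys) (negbTE yt).
Qed.

Lemma tab_s (s t : Sub) q : S i = [set s; t] -> s != t ->
  Fp (val s) q = (q == a) && Fp a (val s) || (q == val t) && Fp (val s) (val t).
Proof.
move=> St st.
have sS : s \in S i by rewrite St !inE eqxx.
case: (Tcase q) => [->|[y ->]].
  by rewrite Fp_sym eq_refl /= eq_sym (negbTE (valP t)) orbF.
rewrite val_eqE (negbTE (valP y)) /=.
case: (boolP (y \in S i)) => yS.
  move: (yS); rewrite St !inE => /orP [] /eqP ->; by rewrite ?eqxx ?(negbTE st) /= ?Fp_irr.
have yt : y != t by apply: contraNneq yS => ->; rewrite St !inE eqxx orbT.
by rewrite B1b // (negbTE yt).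
Qed.

Lemma tripB x : (x = a \/ exists y, y \in S i /\ x = val y) ->
  exists u v w : T, uniq [:: u; v; w] /\ x \in [:: u; v; w] /\
     forall p q, p \in [:: u; v; w] ->
       (Fp p q <-> (p, q) \in [:: (u, v); (v, u); (v, w); (w, v)]).
Proof.
move=> hx.
have /cards2P [s1 [s2 [s12 St]]] : #|S i| == 2 by rewrite K5.
have s1S : s1 \in S i by rewrite St !inE eqxx.
have s2S : s2 \in S i by rewrite St !inE eqxx orbT.
have Sst : forall y, y \in S i -> y = s1 \/ y = s2.
  by move=> y; rewrite St !inE => /orP [] /eqP ->; [left|right].
have Sts : forall y, y \in S i -> y = s2 \/ y = s1.
  by move=> y /Sst [] ->; [right|left].
have s21 : s2 != s1 by rewrite eq_sym.
have St' : S i = [set s2; s1] by rewrite St setUC.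
have b31 := B3 s1S s12 Sst.
have b32 := B3 s2S s21 Sts.
have b2 := @B2 s1 s2.
have tA := fun q => tab_a q St s12.
have t1 := fun q => tab_s q St s12.
have t2 := fun q => tab_s q St' s21.
rewrite (Fp_sym (val s2)) in b32 t2.
have xin : x = a \/ x = val s1 \/ x = val s2.
  by case: hx => [->|[y [/Sst [] -> ->]]]; [left|right;left|right;right].
have n1 : (val s1 == a) = false by exact: negbTE (valP s1).
have n2 : (val s2 == a) = false by exact: negbTE (valP s2).
have n1' : (a == val s1) = false by rewrite eq_sym.
have n2' : (a == val s2) = false by rewrite eq_sym.
have n12 : (val s1 == val s2) = false by rewrite val_eqE (negbTE s12).
have n21 : (val s2 == val s1) = false by rewrite eq_sym.
have fin : forall (u v w : T), uniq [:: u; v; w] -> x \in [:: u; v; w] ->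
  (forall p q, p \in [:: u; v; w] ->
      Fp p q = ((p, q) \in [:: (u, v); (v, u); (v, w); (w, v)])) ->
  exists u v w : T, uniq [:: u; v; w] /\ x \in [:: u; v; w] /\
     forall p q, p \in [:: u; v; w] ->
       (Fp p q <-> (p, q) \in [:: (u, v); (v, u); (v, w); (w, v)]).
  move=> u v w U xi H; exists u, v, w; split=> //; split=> // p q pi.
  by rewrite H.
case E1: (Fp a (val s1)) b31 b32 b2 tA t1 t2; case E2: (Fp a (val s2));
  case E12 : (Fp (val s1) (val s2)) => //= b31 b32 b2 tA t1 t2.
- by case: b2.
- apply: (fin (val s1) a (val s2)).
  + by rewrite /= !inE n1 n12 n2'.
  + by case: xin => [|[|]] ->; rewrite !inE eqxx ?orbT.
  + move=> p q; rewrite !inE => /or3P [] /eqP ->; rewrite ?tA ?t1 ?t2 ?inE !xpair_eqE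
      ?eqxx ?n1 ?n2 ?n1' ?n2' ?n12 ?n21 /=;
    by case: (q == a); case: (q == val s1); case: (q == val s2).
- apply: (fin a (val s1) (val s2)).
  + by rewrite /= !inE n1' n12 n2'.
  + by case: xin => [|[|]] ->; rewrite !inE eqxx ?orbT.
  + move=> p q; rewrite !inE => /or3P [] /eqP ->; rewrite ?tA ?t1 ?t2 ?inE !xpair_eqE
      ?eqxx ?n1 ?n2 ?n1' ?n2' ?n12 ?n21 /=;
    by case: (q == a); case: (q == val s1); case: (q == val s2).
- apply: (fin a (val s2) (val s1)).
  + by rewrite /= !inE n1' n21 n2'.
  + by case: xin => [|[|]] ->; rewrite !inE eqxx ?orbT.
  + move=> p q; rewrite !inE => /or3P [] /eqP ->; rewrite ?tA ?t1 ?t2 ?inE !xpair_eqE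
      ?eqxx ?n1 ?n2 ?n1' ?n2' ?n12 ?n21 /=;
    by case: (q == a); case: (q == val s1); case: (q == val s2).
Qed.

Lemma Fp_LF : Lambda_factor E Fp.
Proof.
apply: LF_intro; [exact: Fp_sub | exact: Fp_sym |] => x.
case: (Tcase x) => [->|[y ->]]; first by apply: tripB; left.
case: (boolP (y \in S i)) => yS; last exact: tripA.
by apply: tripB; right; exists y.
Qed.

Lemma Fp_a1 : Fp a (nb ord0).
Proof.
have := LF_sub LF Hy0; rewrite /G /= => /eqP <-.
by rewrite Fp_av; apply/existsP; exists ord0.
Qed.

End Main.

Unset Implicit Arguments.
Theorem mainTheorem8 (T : finType) (E : rel T) (a : T) (nb : 'I_3 -> T) :
  simple_graph E -> cubic E ->
  #|T| %% 6 = 0 ->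
  injective nb ->
  nbhd E a = [set nb j | j : 'I_3] ->
  ~ has_Lambda_factor_containing E a (nb ord0) ->
  #|YV T a| %% 6 = 0 /\ ~ has_Lambda_factor (Yrel E a nb).
Proof.
move=> sg _ n6 nbi nba hno; split.
  have n0 : 0 < #|T| by apply/card_gt0P; exists a.
  rewrite /YV card_sum card_prod card_ord cardSub; lia.
case=> F LFF.
have : 0 < #|[set q | connect F (inr ord0) q] :\ (inr ord0 : YV T a)|.
  have := cardsD1 (inr ord0 : YV T a) [set q | connect F (inr ord0) q].
  rewrite (LF_card LFF) inE connect0 /= => e; lia.
case/card_gt0P => q; rewrite !inE => /andP [qn cq].
have [r Fr] : exists r, F (inr ord0) r.
  case: (LF_adj2 LFF cq); first by rewrite eq_sym.
    by move=> h; exists q.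
  by case=> t [h _]; exists t.
case: r Fr => [[k y]|k] Fr; last by have := LF_sub LFF Fr.
apply: hno; exists (Fp F k); split.
  apply: (Fp_LF sg nba LFF n6).
exact: (@Fp_a1 T E a nb F LFF k y Fr).
Qed.
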